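(* Let $\mathrm{SU}(2)\subset\mathrm{SO}(4)\times\{1\}$ act on $\Lambda^2_-S^4$. Every point is mapped into the fiber over some ${}^t(x_1,0,0,0,x_5)$ with $x_1\ge0$. For $p_0$ in that fiber, the orbit $\mathrm{SU}(2)\cdot p_0$ is diffeomorphic to $S^3$ if $x_5\ne\pm1$; to $S^2$ if $x_5=1$ and $p_0\ne0$; and to a point if $x_5=1$ and $p_0=0$, or if $x_5=-1$.
   Context: $S^4\subset\mathbb R^5$ is the unit sphere, $\Lambda^2_-S^4$ the bundle of anti-self-dual 2-forms (round metric); $\mathrm{SO}(5)$ acts on $\Lambda^2_-S^4$ by lifting its linear action on $S^4$ to 2-forms ($g\cdot\omega=(g^{-1})^*\omega$). $\mathrm{SU}(2)$ acts $\mathbb C$-linearly on $\mathbb C^2\cong\mathbb R^4$ via $(z_1,z_2)=(x_1+ix_2,x_3+ix_4)$ and fixes $x_5$; $p_0=0$ means $p_0$ lies in the zero section. *)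

(* Defs.v *)
From mathcomp Require Import all_boot all_order all_algebra all_classical all_reals all_analysis.
Import numFieldNormedType.Exports.
Import Order.TTheory GRing.Theory Num.Theory.
Set Implicit Arguments. Unset Strict Implicit. Unset Printing Implicit Defensive.
Local Open Scope ring_scope.
Local Open Scope classical_set_scope.

Fixpoint iterD {R : realType} {V W : normedModType R} (vs : seq V) (f : V -> W) : V -> W :=
  match vs with
  | [::] => f
  | v :: vs' => fun x => derive (iterD vs' f) x v
  end.

Definition smooth_on {R : realType} {V W : normedModType R} (U : set V) (f : V -> W) : Prop :=
  forall vs : seq V,
    (forall x, U x -> {for x, continuous (iterD vs f)}) /\
    (forall x v, U x -> derivable (iterD vs f) x v).

Definition smooth_map {R : realType} {V W : normedModType R} (A : set V) (f : V -> W) : Prop :=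
  forall a, A a -> exists U : set V, [/\ open U, U a &
     (exists F : V -> W, smooth_on U F /\ (forall y, U y -> A y -> F y = f y))].

Definition diffeomorphic {R : realType} {V W : normedModType R} (A : set V) (B : set W) : Prop :=
  exists (f : V -> W) (g : W -> V),
    [/\ (forall a, A a -> B (f a)), (forall b, B b -> A (g b)),
        (forall a, A a -> g (f a) = a), (forall b, B b -> f (g b) = b) &
        (smooth_map A f /\ smooth_map B g)].

(* unit sphere S^{n-1} in R^n (column vectors) *)
Definition sphere {R : realType} (n : nat) : set 'cV[R]_n :=
  [set v | \sum_(i < n) v i 0 ^+ 2 = 1].

Definition point_space {R : realType} : set 'cV[R]_1 := [set 0].

Definition eps5 {R : realType} (m i j k l : 'I_5) : R :=
  \det (\matrix_(r < 5, c < 5) ((nth ord0 [:: m; i; j; k; l] r == c)%:R : R)).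

(* Hodge star on 2-forms on the tangent space T_x S^4 = x^perp, with S^4
   oriented as the boundary of the unit ball (outward normal first):
   vol_{T_x}(u1,..,u4) = det[x,u1,..,u4].  A 2-form is represented by the
   skew matrix Om with omega(u,v) = u^T Om v. *)
Definition hodge {R : realType} (x : 'cV[R]_5) (Om : 'M[R]_5) : 'M[R]_5 :=
  \matrix_(i, j) (2^-1 * \sum_(m < 5) \sum_(k < 5) \sum_(l < 5)
                     eps5 m i j k l * x m 0 * Om k l).

(* total space of Lambda^2_- S^4: pairs (x, Om) with x in S^4 and Om an
   anti-self-dual 2-form on T_x S^4 (skew, annihilating the normal x) *)
Definition ASD_bundle {R : realType} : set ('cV[R]_5 * 'M[R]_5) :=
  [set p : 'cV[R]_5 * 'M[R]_5 | [/\ \sum_(i < 5) p.1 i 0 ^+ 2 = 1, p.2^T = - p.2,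
              p.2 *m p.1 = 0 & hodge p.1 p.2 = - p.2]].

(* action of g in SO(5): g.(x, omega) = (g x, (g^{-1})^* omega); for g orthogonal
   (g^{-1})^* omega has matrix g Om g^T *)
Definition act {R : realType} (g : 'M[R]_5) (p : 'cV[R]_5 * 'M[R]_5) : 'cV[R]_5 * 'M[R]_5 :=
  (g *m p.1, g *m p.2 *m g^T).

(* SU(2) acting C-linearly on C^2 = R^4, (z1,z2) = (x1+ix2, x3+ix4), fixing x5:
   the element [[a, -conj b],[b, conj a]] with a = a1+i a2, b = b1+i b2. *)
Definition su2mx {R : realType} (a1 a2 b1 b2 : R) : 'M[R]_5 :=
  \matrix_(i < 5, j < 5)
    (nth 0 (nth [::] [:: [:: a1; -a2; -b1; -b2; 0];
                         [:: a2;  a1;  b2; -b1; 0];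
                         [:: b1; -b2;  a1;  a2; 0];
                         [:: b2;  b1; -a2;  a1; 0];
                         [:: 0;   0;   0;   0;  1]] i) j).

Definition SU2 {R : realType} : set 'M[R]_5 :=
  [set g | exists a1 a2 b1 b2 : R,
     a1 ^+ 2 + a2 ^+ 2 + b1 ^+ 2 + b2 ^+ 2 = 1 /\ g = su2mx a1 a2 b1 b2].

Definition su2orbit {R : realType} (p : 'cV[R]_5 * 'M[R]_5) : set ('cV[R]_5 * 'M[R]_5) :=
  [set act g p | g in SU2].

Definition pt15 {R : realType} (x1 x5 : R) : 'cV[R]_5 :=
  \col_(i < 5) nth 0 [:: x1; 0; 0; 0; x5] i.

(* Main.v *)
Require Import Defs.
From mathcomp Require Import all_boot all_order all_algebra all_classical all_reals all_analysis.
From mathcomp Require Import ring lra.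
Import numFieldNormedType.Exports.
Import Order.TTheory GRing.Theory Num.Theory.
Local Open Scope ring_scope.
Local Open Scope classical_set_scope.

Require Import Defs.
From mathcomp Require Import all_boot all_order all_algebra all_classical all_reals all_analysis.
Import numFieldNormedType.Exports.
Import Order.TTheory GRing.Theory Num.Theory.
Local Open Scope ring_scope.
Local Open Scope classical_set_scope.
Section Poly.
Context {R : realType} {V W : normedModType R}.

Fixpoint polyk (n : nat) (f : V -> W) : Prop :=
  match n with
  | 0 => exists c : W, f = fun _ => c
  | n'.+1 => continuous f /\ exists D E : V -> V -> W,
      (forall x v (h : R), f (x + h *: v) = f x + h *: D x v + h ^+ 2 *: E x v)
      /\ forall v, polyk n' (fun x => D x v)
  end.

Lemma expand_derive (f : V -> W) x v D E :
  (forall h : R, f (x + h *: v) = f x + h *: D + h ^+ 2 *: E) ->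
  derivable f x v /\ derive f x v = D.
Proof.
move=> Hf.
have H : (fun h : R => h^-1 *: ((f \o shift x) (h *: v) - f x)) @ 0^' --> D.
  have Hc : (fun h : R => D + h *: E) @ 0^' --> D.
    have Hc' : (fun h : R => D + h *: E) @ 0^' --> D + 0 *: E.
      apply: cvg_within_filter.
      apply: cvgD; first exact: cvg_cst.
      apply: cvgZ; [exact: cvg_id | exact: cvg_cst].
    by rewrite scale0r addr0 in Hc'.
  apply: cvg_trans Hc.
  apply: near_eq_cvg. near=> h.
  have h0 : h != 0 by near: h; exact: nbhs_dnbhs_neq.
  rewrite /= /shift [h *: v + x]addrC Hf.
  have -> : f x + h *: D + h ^+ 2 *: E - f x = h *: D + h ^+ 2 *: E.
    by rewrite addrAC [f x + _]addrC addrK.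
  rewrite scalerDr !scalerA mulVf // scale1r.
  by rewrite expr2 mulrA mulVf // mul1r.
split; first by apply/cvg_ex; exists D.
exact: cvg_lim.
Unshelve. all: by end_near. Qed.

Lemma polyk_S n f : polyk n f -> polyk n.+1 f.
Proof.
elim: n f => [|n IH] f /=.
  move=> [c ->]; split; first exact: cst_continuous.
  exists (fun _ _ => 0), (fun _ _ => 0); split.
    by move=> x v h; rewrite !scaler0 !addr0.
  by move=> v; exists 0.
move=> [Hc [D [E [HE HD]]]]; split => //; exists D, E; split => // v.
exact: IH.
Qed.

Arguments polyk_S {n f}.
Lemma polyk_deriv n f : polyk n.+1 f ->
  continuous f /\ (forall x v, derivable f x v) /\
  forall v, polyk n (fun x => derive f x v).
Proof.
move=> /= [Hc [D [E [HE HD]]]]; split => //; split.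
  by move=> x v; have [] := expand_derive _ _ _ _ _ (HE x v).
move=> v.
have -> : (fun x => derive f x v) = (fun x => D x v).
  by apply: funext => x; have [] := expand_derive _ _ _ _ _ (HE x v).
exact: HD.
Qed.

Arguments polyk_deriv {n f}.
Lemma polyk_iterD n f (vs : seq V) : polyk n f -> polyk n (Defs.iterD vs f).
Proof.
elim: vs => [//|v vs IH] /= Hf.
by have [_ [_ ]] := polyk_deriv (polyk_S (IH Hf)); apply.
Qed.

Arguments polyk_iterD {n f}.
Lemma polyk_smooth n f (U : set V) : polyk n f -> smooth_on U f.
Proof.
move=> Hf vs; have [Hc [Hd _]] := polyk_deriv (polyk_S (polyk_iterD vs Hf)).
by split => [x _|x v _]; [exact: Hc | exact: Hd].
Qed.

Arguments polyk_smooth {n f}.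
Lemma polyk_smooth_map n f (A : set V) : polyk n f -> smooth_map A f.
Proof.
move=> Hf a _; exists setT; split => //; first exact: openT.
by exists f; split => //; exact: (polyk_smooth _ Hf).
Qed.
End Poly.

Require Import Defs.
From mathcomp Require Import all_boot all_order all_algebra all_classical all_reals all_analysis.
Import numFieldNormedType.Exports.
Import Order.TTheory GRing.Theory Num.Theory.
Local Open Scope ring_scope.
Local Open Scope classical_set_scope.
Section Cont.
Context {R : realType}.

Lemma mx_cont {X : topologicalType} m n (f : X -> 'M[R]_(m, n)) :
  (forall i j, continuous (fun x => f x i j)) -> continuous f.
Proof.
move=> Hf x A /= [P /= HP sPA].
rewrite nbhs_simpl /=.
have H : \forall y \near x, forall ij : 'I_m * 'I_n, P ij.1 ij.2 (f y ij.1 ij.2).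
  apply: filter_forall => -[i j] /=.
  exact: (Hf i j x _ (HP i j)).
apply: filterS H => y Hy; apply: sPA => i j; exact: (Hy (i, j)).
Qed.

Lemma sum_cont {X : topologicalType} (I : Type) (s : seq I) (g : I -> X -> R^o) :
  (forall i, continuous (g i)) -> continuous (fun x => \sum_(i <- s) g i x).
Proof.
move=> Hg; elim: s => [|a s IH].
  under eq_fun do rewrite big_nil. exact: cst_continuous.
under eq_fun do rewrite big_cons.
move=> x; apply: cvgD; [exact: Hg | exact: IH].
Qed.

Lemma mulmx_cont {X : topologicalType} m n p (f : X -> 'M[R]_(m, n)) (g : X -> 'M[R]_(n, p)) :
  continuous f -> continuous g -> continuous (fun x => f x *m g x).
Proof.
move=> Hf Hg; apply: mx_cont => i j.
under eq_fun do rewrite mxE.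
apply: sum_cont => k x; apply: cvgM.
- exact: (continuous_comp (Hf x) (@coord_continuous R _ _ i k (f x))).
- exact: (continuous_comp (Hg x) (@coord_continuous R _ _ k j (g x))).
Qed.

Lemma trmx_cont {X : topologicalType} m n (f : X -> 'M[R]_(m, n)) :
  continuous f -> continuous (fun x => (f x)^T).
Proof.
move=> Hf; apply: mx_cont => i j.
under eq_fun do rewrite mxE.
move=> x; exact: (continuous_comp (Hf x) (@coord_continuous R _ _ j i (f x))).
Qed.

Lemma fst_cont (U V : normedModType R) : continuous (@fst U V).
Proof. move=> x; exact: cvg_fst. Qed.
Lemma snd_cont (U V : normedModType R) : continuous (@snd U V).
Proof. move=> x; exact: cvg_snd. Qed.
Lemma pair_cont {X : topologicalType} (U V : normedModType R) (f : X -> U) (g : X -> V) :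
  continuous f -> continuous g -> continuous (fun x => (f x, g x)).
Proof. move=> Hf Hg x; apply: cvg_pair; [exact: Hf | exact: Hg]. Qed.
End Cont.

Notation o0 := (@Ordinal 5 0 isT).
Notation o1 := (@Ordinal 5 1 isT).
Notation o2 := (@Ordinal 5 2 isT).
Notation o3 := (@Ordinal 5 3 isT).
Notation o4 := (@Ordinal 5 4 isT).

Lemma ord5 (i : 'I_5) : i = o0 \/ i = o1 \/ i = o2 \/ i = o3 \/ i = o4.
Proof.
case: i => [[|[|[|[|[|k]]]]] Hi] //;
  [left|right;left|right;right;left|right;right;right;left|right;right;right;right];
  exact: val_inj.
Qed.

Lemma sum5 {R : ringType} (F : 'I_5 -> R) : \sum_(i < 5) F i = F o0 + F o1 + F o2 + F o3 + F o4.
Proof.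
rewrite !big_ord_recl big_ord0 addr0 !addrA.
by congr (_ + _ + _ + _ + _); congr F; apply: val_inj.
Qed.

Definition Bm {R : ringType} (s w1 w2 w3 : R) : 'M[R]_5 :=
  \matrix_(i < 5, j < 5)
    (nth 0 (nth [::] [:: [:: 0; w1; w2; w3; 0];
                         [:: -w1; 0; -(s*w3); s*w2; 0];
                         [:: -w2; s*w3; 0; -(s*w1); 0];
                         [:: -w3; -(s*w2); s*w1; 0; 0];
                         [:: 0; 0; 0; 0; 0]] i) j).

Definition rot1 {R : ringType} (a1 a2 b1 b2 w1 w2 w3 : R) :=
  (a1^+2+a2^+2-b1^+2-b2^+2)*w1 + (2*a2*b1+2*a1*b2)*w2 + (2*a2*b2 - 2*a1*b1)*w3.
Definition rot2 {R : ringType} (a1 a2 b1 b2 w1 w2 w3 : R) :=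
  (2*a2*b1 - 2*a1*b2)*w1 + (a1^+2-a2^+2+b1^+2-b2^+2)*w2 + (2*b1*b2+2*a1*a2)*w3.
Definition rot3 {R : ringType} (a1 a2 b1 b2 w1 w2 w3 : R) :=
  (2*a2*b2+2*a1*b1)*w1 + (2*b1*b2 - 2*a1*a2)*w2 + (a1^+2-a2^+2-b1^+2+b2^+2)*w3.

Ltac split5 := let i := fresh "i" in let j := fresh "j" in intros i j;
  case: (ord5 i) => [->|[->|[->|[->|->]]]]; case: (ord5 j) => [->|[->|[->|[->|->]]]].

Ltac split51 := let i := fresh "i" in let j := fresh "j" in intros i j;
  rewrite ?(ord1 j); case: (ord5 i) => [->|[->|[->|[->|->]]]].

Lemma act_B1 {R : realType} (a1 a2 b1 b2 w1 w2 w3 : R) :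
  su2mx a1 a2 b1 b2 *m Bm 1 w1 w2 w3 *m (su2mx a1 a2 b1 b2)^T =
  Bm 1 (rot1 a1 a2 b1 b2 w1 w2 w3) (rot2 a1 a2 b1 b2 w1 w2 w3) (rot3 a1 a2 b1 b2 w1 w2 w3).
Proof.
rewrite /rot1 /rot2 /rot3.
apply/matrixP => i j; rewrite !mxE !sum5 !mxE !sum5 !mxE; move: i j; split5; cbn [nth nat_of_ord]; ring.
Qed.

Lemma act_Bm1 {R : realType} (a1 a2 b1 b2 w1 w2 w3 : R) :
  su2mx a1 a2 b1 b2 *m Bm (-1) w1 w2 w3 *m (su2mx a1 a2 b1 b2)^T =
  Bm (-1) ((a1^+2+a2^+2+b1^+2+b2^+2) * w1) ((a1^+2+a2^+2+b1^+2+b2^+2) * w2)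
     ((a1^+2+a2^+2+b1^+2+b2^+2) * w3).
Proof.
apply/matrixP => i j; rewrite !mxE !sum5 !mxE !sum5 !mxE; move: i j; split5; cbn [nth nat_of_ord]; ring.
Qed.

Lemma act_pt {R : realType} (a1 a2 b1 b2 x1 x5 : R) :
  su2mx a1 a2 b1 b2 *m pt15 x1 x5 = \col_(i < 5) nth 0 [:: x1 * a1; x1 * a2; x1 * b1; x1 * b2; x5] i.
Proof.
apply/matrixP => i j; rewrite !mxE !sum5 !mxE; move: i j; split51; cbn [nth nat_of_ord]; ring.
Qed.

Lemma ordeqE n (a b : 'I_n) : (a == b) = (nat_of_ord a == nat_of_ord b)%N. Proof. by []. Qed.
Ltac detstep := rewrite (expand_det_row _ ord0) !big_ord_recr big_ord0 /= !mxE /= ?ordeqE /= ?mulr0n ?mulr1n ?mul0r ?add0r ?addr0 ?mul1r /cofactor.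
Ltac epsval := rewrite /eps5; do 4 detstep;
  rewrite /cofactor det_mx11 !mxE /= ?ordeqE /= ?mulr0n ?mulr1n ?exprS ?expr0 ?mulr1 ?mulN1r ?opprK ?mul1r.

Section Eps.
Context {R : realType}.
Lemma e01a : @eps5 R o4 o0 o1 o2 o3 = 1. Proof. by epsval. Qed.
Lemma e01b : @eps5 R o4 o0 o1 o3 o2 = -1. Proof. by epsval. Qed.
Lemma e02a : @eps5 R o4 o0 o2 o1 o3 = -1. Proof. by epsval. Qed.
Lemma e02b : @eps5 R o4 o0 o2 o3 o1 = 1. Proof. by epsval. Qed.
Lemma e03a : @eps5 R o4 o0 o3 o1 o2 = 1. Proof. by epsval. Qed.
Lemma e03b : @eps5 R o4 o0 o3 o2 o1 = -1. Proof. by epsval. Qed.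

Lemma eps5_rep (m i j k l : 'I_5) : ~~ uniq [:: m; i; j; k; l] -> @eps5 R m i j k l = 0.
Proof.
move/(uniqPn ord0) => [a [b [ab b5 Hab]]].
rewrite /eps5.
have a5 : (a < 5)%N by apply: ltn_trans b5.
apply: (@determinant_alternate _ _ _ (Ordinal a5) (Ordinal b5)).
  by rewrite ordeqE /= neq_ltn ab.
by move=> c; rewrite !mxE /= Hab.
Qed.
End Eps.

Section Hodge.
Context {R : realType}.
Lemma hodge_e5 (s : R) (Om : 'M[R]_5) i j :
  hodge (pt15 0 s) Om i j = 2^-1 * (s * \sum_k \sum_l eps5 o4 i j k l * Om k l).
Proof.
rewrite mxE; congr (_ * _).
have E : forall m : 'I_5, \sum_k \sum_l eps5 m i j k l * pt15 0 s m 0 * Om k l =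
   pt15 0 s m 0 * \sum_k \sum_l eps5 m i j k l * Om k l.
  move=> m; rewrite mulr_sumr; apply: eq_bigr => k _; rewrite mulr_sumr.
  by apply: eq_bigr => l _; ring.
rewrite (eq_bigr _ (fun m _ => E m)) sum5 !mxE; cbn [nth nat_of_ord].
by rewrite !mul0r !add0r.
Qed.

Lemma hsum (Om : 'M[R]_5) i j :
  \sum_k \sum_l eps5 o4 i j k l * Om k l =
  \sum_k \sum_l (if uniq [:: o4; i; j; k; l] then eps5 o4 i j k l * Om k l else 0).
Proof.
apply: eq_bigr => k _; apply: eq_bigr => l _.
by case: ifP => // /negbT /eps5_rep ->; rewrite mul0r.
Qed.

Lemma hodge01 (s : R) Om : hodge (pt15 0 s) Om o0 o1 = 2^-1 * (s * (Om o2 o3 - Om o3 o2)).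
Proof. rewrite hodge_e5 hsum !sum5 /= e01a e01b; ring. Qed.
Lemma hodge02 (s : R) Om : hodge (pt15 0 s) Om o0 o2 = 2^-1 * (s * (Om o3 o1 - Om o1 o3)).
Proof. rewrite hodge_e5 hsum !sum5 /= e02a e02b; ring. Qed.
Lemma hodge03 (s : R) Om : hodge (pt15 0 s) Om o0 o3 = 2^-1 * (s * (Om o1 o2 - Om o2 o1)).
Proof. rewrite hodge_e5 hsum !sum5 /= e03a e03b; ring. Qed.

Lemma colE (M : 'M[R]_5) (v : 'cV[R]_5) i : (M *m v) i 0 = \sum_k M i k * v k 0.
Proof. by rewrite mxE. Qed.

Lemma ASD_form (s : R) (Om : 'M[R]_5) : s = 1 \/ s = -1 ->
  ASD_bundle (pt15 0 s, Om) -> Om = Bm s (Om o0 o1) (Om o0 o2) (Om o0 o3).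
Proof.
move=> hs [/= _ Hsk Hx Hh].
have sk : forall i j, Om j i = - Om i j.
  by move=> i j; move/matrixP: Hsk => /(_ i j); rewrite !mxE.
have c4 : forall i, Om i o4 = 0.
  move=> i; move/matrixP: Hx => /(_ i 0); rewrite !mxE sum5 !mxE; cbn [nth nat_of_ord].
  rewrite !mulr0 !add0r => /eqP; rewrite mulf_eq0 => /orP [/eqP //|/eqP hs0].
  by exfalso; case: hs hs0 => -> /eqP; rewrite ?oppr_eq0 oner_eq0.
have h01 := hodge01 s Om; have h02 := hodge02 s Om; have h03 := hodge03 s Om.
rewrite Hh !mxE in h01 h02 h03.
have d : forall i, Om i i = 0.
  move=> i; have := sk i i; move=> /eqP; rewrite -subr_eq0 opprK -mulr2n mulrn_eq0 /= => /eqP //.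
have := sk o1 o2; have := sk o1 o3; have := sk o2 o3; have := sk o0 o1; have := sk o0 o2; have := sk o0 o3.
have := c4 o0; have := c4 o1; have := c4 o2; have := c4 o3; have := c4 o4.
have := sk o4 o0; have := sk o4 o1; have := sk o4 o2; have := sk o4 o3.
have := d o0; have := d o1; have := d o2; have := d o3.
move: h01 h02 h03.
case: hs => -> h01 h02 h03 *; apply/matrixP => i j; rewrite !mxE; move: i j; split5; cbn [nth nat_of_ord]; lra.
Qed.
End Hodge.

Section Part1.
Context {R : realType}.
Lemma su2_mulv (a1 a2 b1 b2 : R) (v : 'cV[R]_5) :
  su2mx a1 a2 b1 b2 *m v = \col_(i < 5) nth 0
    [:: a1 * v o0 0 - a2 * v o1 0 - b1 * v o2 0 - b2 * v o3 0;
        a2 * v o0 0 + a1 * v o1 0 + b2 * v o2 0 - b1 * v o3 0;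
        b1 * v o0 0 - b2 * v o1 0 + a1 * v o2 0 + a2 * v o3 0;
        b2 * v o0 0 + b1 * v o1 0 - a2 * v o2 0 + a1 * v o3 0;
        v o4 0] i.
Proof.
apply/matrixP => i j; rewrite !mxE !sum5 !mxE; move: i j; split51; cbn [nth nat_of_ord]; ring.
Qed.

Lemma part1 (p : 'cV[R]_5 * 'M[R]_5) :
  exists g, SU2 g /\ exists x1 x5 : R, 0 <= x1 /\ (act g p).1 = pt15 x1 x5.
Proof.
set y0 := p.1 o0 0; set y1 := p.1 o1 0; set y2 := p.1 o2 0; set y3 := p.1 o3 0.
set r2 := y0 ^+ 2 + y1 ^+ 2 + y2 ^+ 2 + y3 ^+ 2.
have r2ge : 0 <= r2 by rewrite /r2; nra.
have [r0|rn0] := eqVneq r2 0.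
  have z0 : y0 = 0 by move: r0; rewrite /r2; nra.
  have z1 : y1 = 0 by move: r0; rewrite /r2; nra.
  have z2 : y2 = 0 by move: r0; rewrite /r2; nra.
  have z3 : y3 = 0 by move: r0; rewrite /r2; nra.
  exists (su2mx 1 0 0 0); split; first by exists 1, 0, 0, 0; split => //; ring.
  exists 0, (p.1 o4 0); split => //=.
  rewrite su2_mulv; apply/matrixP => i j; rewrite !mxE; move: i j; split51; cbn [nth nat_of_ord];
    rewrite -/y0 -/y1 -/y2 -/y3 ?z0 ?z1 ?z2 ?z3; ring.
set r := Num.sqrt r2.
have rp : 0 < r by rewrite sqrtr_gt0 lt_def rn0 r2ge.
have rr : r ^+ 2 = r2 by rewrite sqr_sqrtr.
have rn : r != 0 by rewrite gt_eqF.
exists (su2mx (y0 / r) (- (y1 / r)) (- (y2 / r)) (- (y3 / r))); split.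
  exists (y0 / r), (- (y1 / r)), (- (y2 / r)), (- (y3 / r)); split => //.
  transitivity (r2 / r ^+ 2); first by rewrite /r2; field.
  by rewrite rr divff.
exists r, (p.1 o4 0); split; first exact: ltW.
rewrite /= su2_mulv; apply/matrixP => i j; rewrite !mxE; move: i j; split51; cbn [nth nat_of_ord];
  rewrite -/y0 -/y1 -/y2 -/y3 //; try (field; done).
  transitivity (r2 / r); first by rewrite /r2; field.
by rewrite -rr expr2 mulfK.
Qed.
End Part1.

Section Smooth.
Context {R : realType}.
Notation q0 := (@Ordinal 4 0 isT).
Notation q1 := (@Ordinal 4 1 isT).
Notation q2 := (@Ordinal 4 2 isT).
Notation q3 := (@Ordinal 4 3 isT).
Definition Sv (u : 'cV[R]_4) := su2mx (u q0 0) (u q1 0) (u q2 0) (u q3 0).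

Lemma pairD (U V : normedModType R) (a c : U) (b d : V) : (a, b) + (c, d) = (a + c, b + d).
Proof. by []. Qed.
Lemma pairZ (U V : normedModType R) (h : R) (a : U) (b : V) : h *: (a, b) = (h *: a, h *: b).
Proof. by []. Qed.

Lemma act_exp (M A : 'M[R]_5) (h : R) (p : 'cV[R]_5 * 'M[R]_5) :
  act (M + h *: A) p = act M p + h *: (A *m p.1, A *m p.2 *m M^T + M *m p.2 *m A^T)
     + h ^+ 2 *: (0, A *m p.2 *m A^T).
Proof.
rewrite /act !pairZ !pairD /=; congr (_, _).
  by rewrite mulmxDl -scalemxAl scaler0 addr0.
rewrite linearD linearZ /= !mulmxDl !mulmxDr -!scalemxAl -!scalemxAr.
rewrite scalerDr !scalerA -expr2 !addrA; congr (_ + _).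
by rewrite addrAC.
Qed.

Lemma Sv_lin u v (h : R) : Sv (u + h *: v) = Sv u + h *: (Sv v - Sv 0).
Proof.
apply/matrixP => i j; rewrite /Sv !mxE; move: i j; split5; cbn [nth nat_of_ord]; ring.
Qed.

Lemma cu (i : 'I_4) : continuous (fun u : 'cV[R]_4 => u i 0).
Proof. exact: coord_continuous. Qed.

Lemma add_cont {X : topologicalType} (U : normedModType R) (f g : X -> U) :
  continuous f -> continuous g -> continuous (fun x => f x + g x).
Proof. by move=> Hf Hg x; apply: cvgD; [exact: Hf | exact: Hg]. Qed.
Lemma scal_cont {X : topologicalType} (U : normedModType R) (c : X -> R) (M : U) :
  continuous c -> continuous (fun x => c x *: M).
Proof. by move=> Hc x; apply: cvgZ; [exact: Hc | exact: cvg_cst]. Qed.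

Lemma Sv_cont : continuous Sv.
Proof.
pose K : 'M[R]_5 := su2mx 0 0 0 0.
have -> : Sv = fun u => u q0 0 *: (su2mx 1 0 0 0 - K) + u q1 0 *: (su2mx 0 1 0 0 - K)
   + u q2 0 *: (su2mx 0 0 1 0 - K) + u q3 0 *: (su2mx 0 0 0 1 - K) + K.
  apply: funext => u; apply/matrixP => i j; rewrite /Sv /K !mxE; move: i j; split5;
    cbn [nth nat_of_ord]; ring.
by repeat apply: add_cont; try exact: cst_continuous; apply: scal_cont; exact: cu.
Qed.

Definition Av v := Sv v - Sv 0.

Lemma G_polyk (p0 : 'cV[R]_5 * 'M[R]_5) : polyk 2 (fun u : 'cV[R]_4 => act (Sv u) p0).
Proof.
split.
  rewrite /act; apply: pair_cont.
    apply: mulmx_cont; [exact: Sv_cont | exact: cst_continuous].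
  apply: mulmx_cont; last exact: trmx_cont Sv_cont.
  apply: mulmx_cont; [exact: Sv_cont | exact: cst_continuous].
exists (fun u v => (Av v *m p0.1, Av v *m p0.2 *m (Sv u)^T + Sv u *m p0.2 *m (Av v)^T)).
exists (fun u v => (0, Av v *m p0.2 *m (Av v)^T)).
split; first by move=> u v h; rewrite Sv_lin act_exp.
move=> v; split.
  apply: pair_cont; first exact: cst_continuous.
  apply: add_cont.
    apply: mulmx_cont; last exact: trmx_cont Sv_cont.
    exact: cst_continuous.
  apply: mulmx_cont; last exact: cst_continuous.
  apply: mulmx_cont; [exact: Sv_cont | exact: cst_continuous].
exists (fun u w => (0, Av v *m p0.2 *m (Av w)^T + Av w *m p0.2 *m (Av v)^T)).
exists (fun u w => 0).
split; last by move=> w; exists (0, Av v *m p0.2 *m (Av w)^T + Av w *m p0.2 *m (Av v)^T).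
move=> u w h; rewrite Sv_lin -/(Av w) scaler0 addr0 !pairZ !pairD scaler0 addr0; congr (_, _).
move: (Av v) (Av w) (Sv u) => a b S.
rewrite linearD linearZ /= mulmxDr -scalemxAr !mulmxDl -!scalemxAl scalerDr.
by rewrite addrACA.
Qed.
End Smooth.

Section CaseC.
Context {R : realType}.

Lemma norm_pt (x1 x5 : R) (p0 : 'cV[R]_5 * 'M[R]_5) :
  ASD_bundle p0 -> p0.1 = pt15 x1 x5 -> x1 ^+ 2 + x5 ^+ 2 = 1.
Proof.
move=> [H _ _ _] E; rewrite E sum5 !mxE in H; cbn [nth nat_of_ord] in H.
by rewrite -H; ring.
Qed.

Lemma pt_ext (x1 x5 : R) (v : 'cV[R]_5) :
  v = \col_(i < 5) nth 0 [:: x1; 0; 0; 0; x5] i -> v = pt15 x1 x5.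
Proof. by []. Qed.

Lemma diff_point (A : set ('cV[R]_5 * 'M[R]_5)) p0 :
  A = [set p0] -> diffeomorphic A (@point_space R).
Proof.
move=> HA; exists (fun _ => 0), (fun _ => p0); split.
- by [].
- by rewrite HA.
- by rewrite HA => a ->.
- by move=> b; rewrite /point_space /= => ->.
- split; apply: (@polyk_smooth_map _ _ _ 0); [exists 0 | exists p0]; by [].
Qed.

Lemma orbit_single (p0 : 'cV[R]_5 * 'M[R]_5) :
  (forall g, SU2 g -> act g p0 = p0) -> su2orbit p0 = [set p0].
Proof.
move=> H; apply/seteqP; split => x.
  by move=> [g Hg <-]; rewrite /= H.
move=> /= ->; exists (su2mx 1 0 0 0); last by apply: H; exists 1, 0, 0, 0; split => //; ring.
by exists 1, 0, 0, 0; split => //; ring.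
Qed.

Lemma caseC (x1 x5 : R) (p0 : 'cV[R]_5 * 'M[R]_5) :
  ASD_bundle p0 -> p0.1 = pt15 x1 x5 ->
  (x5 = 1 /\ p0.2 = 0) \/ x5 = -1 -> diffeomorphic (su2orbit p0) (@point_space R).
Proof.
move=> HA E1 Hc; have N := norm_pt _ _ _ HA E1.
have x10 : x1 = 0.
  case: Hc => [[-> _]|->] in N; apply/eqP; rewrite -sqrf_eq0; apply/eqP; move: N; lra.
apply: diff_point; apply: orbit_single => g [a1 [a2 [b1 [b2 [Hn ->]]]]].
case: Hc => [[e5 e2]|e5].
  rewrite /act [in RHS](surjective_pairing p0) E1 e2 mulmx0 mul0mx act_pt x10 e5; congr (_, _).
  by apply/matrixP => i j; rewrite !mxE; move: i j; split51; cbn [nth nat_of_ord]; ring.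
have HA' : ASD_bundle (pt15 0 (-1), p0.2).
  by move: HA; rewrite -x10 -e5 -E1 -surjective_pairing.
have F := ASD_form _ _ (or_intror erefl) HA'.
rewrite /act [in RHS](surjective_pairing p0) E1 F act_Bm1 Hn !mul1r act_pt x10 e5; congr (_, _).
by apply/matrixP => i j; rewrite !mxE; move: i j; split51; cbn [nth nat_of_ord]; ring.
Qed.
End CaseC.

Notation q0 := (@Ordinal 4 0 isT).
Notation q1 := (@Ordinal 4 1 isT).
Notation q2 := (@Ordinal 4 2 isT).
Notation q3 := (@Ordinal 4 3 isT).
Lemma ord4 (i : 'I_4) : i = q0 \/ i = q1 \/ i = q2 \/ i = q3.
Proof.
case: i => [[|[|[|[|k]]]] Hi] //;
  [left|right;left|right;right;left|right;right;right]; exact: val_inj.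
Qed.
Lemma sum4 {R : ringType} (F : 'I_4 -> R) : \sum_(i < 4) F i = F q0 + F q1 + F q2 + F q3.
Proof.
rewrite !big_ord_recl big_ord0 addr0 !addrA.
by congr (_ + _ + _ + _); congr F; apply: val_inj.
Qed.
Ltac split41 := let i := fresh "i" in let j := fresh "j" in intros i j;
  rewrite ?(ord1 j); case: (ord4 i) => [->|[->|[->|->]]].

Section CaseA.
Context {R : realType}.

Definition Fa (x1 : R) (p : 'cV[R]_5 * 'M[R]_5) : 'cV[R]_4 :=
  \col_(i < 4) (x1^-1 * p.1 (nth o0 [:: o0; o1; o2; o3] i) 0).

Lemma c1_cont (k : 'I_5) : continuous (fun p : 'cV[R]_5 * 'M[R]_5 => p.1 k 0).
Proof. move=> p; exact: (continuous_comp (@fst_cont _ _ _ p) (@coord_continuous R _ _ k 0 p.1)). Qed.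

Lemma Fa_polyk x1 : polyk 1 (Fa x1).
Proof.
split.
  apply: mx_cont => i j; rewrite /Fa; under eq_fun do rewrite mxE.
  move=> p; apply: cvgM; [exact: cvg_cst | exact: c1_cont].
exists (fun _ q => Fa x1 q), (fun _ _ => 0); split; last by move=> v; exists (Fa x1 v).
move=> p q h; rewrite scaler0 addr0; apply/matrixP => i j; rewrite !mxE /=; ring.
Qed.

Lemma caseA (x1 x5 : R) (p0 : 'cV[R]_5 * 'M[R]_5) :
  ASD_bundle p0 -> 0 <= x1 -> p0.1 = pt15 x1 x5 -> x5 != 1 -> x5 != -1 ->
  diffeomorphic (su2orbit p0) (@sphere R 4).
Proof.
move=> HA x1ge E1 h1 h2.
have N := norm_pt _ _ _ HA E1.
have x1n : x1 != 0.
  apply/eqP => x10; rewrite x10 in N.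
  have e : x5 ^+ 2 = 1 by rewrite -N; ring.
  have : (x5 - 1) * (x5 + 1) = 0.
    by transitivity (x5 ^+ 2 - 1); [ring | rewrite e subrr].
  move/eqP; rewrite mulf_eq0 subr_eq0 addr_eq0 => /orP [] /eqP e'.
    by rewrite e' eqxx in h1.
  by rewrite e' eqxx in h2.
have Fa_act : forall a1 a2 b1 b2, Fa x1 (act (su2mx a1 a2 b1 b2) p0) =
    \col_(i < 4) nth 0 [:: a1; a2; b1; b2] i.
  move=> a1 a2 b1 b2; rewrite /act /= E1 act_pt; apply/matrixP; split41;
    rewrite !mxE; cbn [nth nat_of_ord]; by field.
exists (fun p => Fa x1 p). exists (fun u => act (Sv u) p0). split.
- move=> a [g [a1 [a2 [b1 [b2 [Hn ->]]]]] <-]; rewrite Fa_act /sphere /= sum4 !mxE;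
    cbn [nth nat_of_ord]; exact: Hn.
- move=> b Hb; exists (Sv b) => //; exists (b q0 0), (b q1 0), (b q2 0), (b q3 0); split => //.
  by move: Hb; rewrite /sphere /= sum4.
- move=> a [g [a1 [a2 [b1 [b2 [Hn ->]]]]] <-]; rewrite Fa_act /Sv !mxE; cbn [nth nat_of_ord].
  by [].
- move=> b _; rewrite /Sv Fa_act; apply/matrixP; split41; rewrite mxE; cbn [nth nat_of_ord]; by [].
- split; [exact: polyk_smooth_map (Fa_polyk x1) | exact: polyk_smooth_map (G_polyk p0)].
Qed.
End CaseA.

Section Rot.
Context {R : realType}.

Definition qm1 (p1 p2 p3 p4 c1 c2 c3 c4 : R) := p1*c1 - p2*c2 - p3*c3 - p4*c4.
Definition qm2 (p1 p2 p3 p4 c1 c2 c3 c4 : R) := p2*c1 + p1*c2 + p4*c3 - p3*c4.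
Definition qm3 (p1 p2 p3 p4 c1 c2 c3 c4 : R) := p3*c1 - p4*c2 + p1*c3 + p2*c4.
Definition qm4 (p1 p2 p3 p4 c1 c2 c3 c4 : R) := p4*c1 + p3*c2 - p2*c3 + p1*c4.

Lemma qm_norm (q1 q2 q3 q4 p1 p2 p3 p4 : R) :
  let u1 := qm1 q1 q2 q3 q4 p1 (-p2) (-p3) (-p4) in
  let u2 := qm2 q1 q2 q3 q4 p1 (-p2) (-p3) (-p4) in
  let u3 := qm3 q1 q2 q3 q4 p1 (-p2) (-p3) (-p4) in
  let u4 := qm4 q1 q2 q3 q4 p1 (-p2) (-p3) (-p4) in
  u1^+2 + u2^+2 + u3^+2 + u4^+2 = (q1^+2+q2^+2+q3^+2+q4^+2) * (p1^+2+p2^+2+p3^+2+p4^+2).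
Proof. rewrite /qm1 /qm2 /qm3 /qm4 /=; ring. Qed.

Lemma qm_rot (q1 q2 q3 q4 p1 p2 p3 p4 : R) :
  let u1 := qm1 q1 q2 q3 q4 p1 (-p2) (-p3) (-p4) in
  let u2 := qm2 q1 q2 q3 q4 p1 (-p2) (-p3) (-p4) in
  let u3 := qm3 q1 q2 q3 q4 p1 (-p2) (-p3) (-p4) in
  let u4 := qm4 q1 q2 q3 q4 p1 (-p2) (-p3) (-p4) in
  let n := (p1^+2+p2^+2+p3^+2+p4^+2) in
  let w1 := rot1 p1 p2 p3 p4 1 0 0 in
  let w2 := rot2 p1 p2 p3 p4 1 0 0 in
  let w3 := rot3 p1 p2 p3 p4 1 0 0 in
  [/\ rot1 u1 u2 u3 u4 w1 w2 w3 = n ^+ 2 * rot1 q1 q2 q3 q4 1 0 0,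
      rot2 u1 u2 u3 u4 w1 w2 w3 = n ^+ 2 * rot2 q1 q2 q3 q4 1 0 0 &
      rot3 u1 u2 u3 u4 w1 w2 w3 = n ^+ 2 * rot3 q1 q2 q3 q4 1 0 0].
Proof. rewrite /qm1 /qm2 /qm3 /qm4 /rot1 /rot2 /rot3 /=; split; ring. Qed.

Lemma hit (c1 c2 c3 : R) : c1^+2 + c2^+2 + c3^+2 = 1 ->
  exists a1 a2 b1 b2 : R, a1^+2 + a2^+2 + b1^+2 + b2^+2 = 1 /\
    [/\ rot1 a1 a2 b1 b2 1 0 0 = c1, rot2 a1 a2 b1 b2 1 0 0 = c2 &
        rot3 a1 a2 b1 b2 1 0 0 = c3].
Proof.
move=> Hc.
have [e|ne] := eqVneq c1 (-1).
  have z2 : c2 = 0 by move: Hc; rewrite e; nra.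
  have z3 : c3 = 0 by move: Hc; rewrite e; nra.
  exists 0, 0, 1, 0; rewrite /rot1 /rot2 /rot3 e z2 z3; split; [ring|split; ring].
have c1g : -1 < c1.
  rewrite lt_def ne /=; move: Hc; nra.
set s := Num.sqrt ((1 + c1) / 2).
have sp : 0 < s by rewrite sqrtr_gt0; apply: divr_gt0 => //; lra.
have ss : s ^+ 2 = (1 + c1) / 2 by rewrite sqr_sqrtr //; apply: divr_ge0 => //; lra.
have sn : s != 0 by rewrite gt_eqF.
exists s, 0, (c3 / (2 * s)), (- (c2 / (2 * s))); rewrite /rot1 /rot2 /rot3.
have h1 : 1 + c1 != 0 by rewrite gt_eqF //; lra.
split; last split.
- transitivity (s^+2 + (c2^+2 + c3^+2) / (4 * s^+2)); first by field.
  rewrite ss; have -> : c2^+2 + c3^+2 = (1 - c1) * (1 + c1) by move: Hc; nra.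
  by field.
- transitivity (s^+2 - (c2^+2 + c3^+2) / (4 * s^+2)); first by field.
  rewrite ss; have -> : c2^+2 + c3^+2 = (1 - c1) * (1 + c1) by move: Hc; nra.
  by field.
- by field.
- by field.
Qed.

Lemma rot_lin (a1 a2 b1 b2 l x1 x2 x3 : R) :
  [/\ rot1 a1 a2 b1 b2 (l*x1) (l*x2) (l*x3) = l * rot1 a1 a2 b1 b2 x1 x2 x3,
      rot2 a1 a2 b1 b2 (l*x1) (l*x2) (l*x3) = l * rot2 a1 a2 b1 b2 x1 x2 x3 &
      rot3 a1 a2 b1 b2 (l*x1) (l*x2) (l*x3) = l * rot3 a1 a2 b1 b2 x1 x2 x3].
Proof. rewrite /rot1 /rot2 /rot3; split; ring. Qed.

Lemma hit2 (w1 w2 w3 c1 c2 c3 lam : R) : 0 < lam ->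
  w1^+2 + w2^+2 + w3^+2 = lam^+2 -> c1^+2 + c2^+2 + c3^+2 = 1 ->
  exists a1 a2 b1 b2 : R, a1^+2 + a2^+2 + b1^+2 + b2^+2 = 1 /\
    [/\ rot1 a1 a2 b1 b2 w1 w2 w3 = lam * c1, rot2 a1 a2 b1 b2 w1 w2 w3 = lam * c2 &
        rot3 a1 a2 b1 b2 w1 w2 w3 = lam * c3].
Proof.
move=> lp Hw Hc.
have ln : lam != 0 by rewrite gt_eqF.
set v1 := w1 / lam; set v2 := w2 / lam; set v3 := w3 / lam.
have e1 : w1 = lam * v1 by rewrite /v1; field.
have e2 : w2 = lam * v2 by rewrite /v2; field.
have e3 : w3 = lam * v3 by rewrite /v3; field.
have Hv : v1^+2 + v2^+2 + v3^+2 = 1.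
  rewrite /v1 /v2 /v3; transitivity ((w1^+2 + w2^+2 + w3^+2) / lam^+2); first by field.
  by rewrite Hw divff // expf_neq0.
clearbody v1 v2 v3; subst w1 w2 w3.
have [p1 [p2 [p3 [p4 [Hp [r1 r2 r3]]]]]] := hit _ _ _ Hv.
have [q1 [q2 [q3 [q4 [Hq [s1 s2 s3]]]]]] := hit _ _ _ Hc.
have [m1 m2 m3] := qm_rot q1 q2 q3 q4 p1 p2 p3 p4.
move: m1 m2 m3; rewrite /= r1 r2 r3 Hp expr1n !mul1r s1 s2 s3 => m1 m2 m3.
exists (qm1 q1 q2 q3 q4 p1 (-p2) (-p3) (-p4)), (qm2 q1 q2 q3 q4 p1 (-p2) (-p3) (-p4)),
       (qm3 q1 q2 q3 q4 p1 (-p2) (-p3) (-p4)), (qm4 q1 q2 q3 q4 p1 (-p2) (-p3) (-p4)).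
split; first by rewrite qm_norm Hq Hp mulr1.
have [l1 l2 l3] := rot_lin (qm1 q1 q2 q3 q4 p1 (-p2) (-p3) (-p4)) (qm2 q1 q2 q3 q4 p1 (-p2) (-p3) (-p4))
       (qm3 q1 q2 q3 q4 p1 (-p2) (-p3) (-p4)) (qm4 q1 q2 q3 q4 p1 (-p2) (-p3) (-p4)) lam v1 v2 v3.
by rewrite l1 l2 l3 m1 m2 m3.
Qed.
End Rot.

Notation t0 := (@Ordinal 3 0 isT).
Notation t1 := (@Ordinal 3 1 isT).
Notation t2 := (@Ordinal 3 2 isT).
Lemma ord3 (i : 'I_3) : i = t0 \/ i = t1 \/ i = t2.
Proof.
case: i => [[|[|[|k]]] Hi] //; [left|right;left|right;right]; exact: val_inj.
Qed.
Lemma sum3 {R : ringType} (F : 'I_3 -> R) : \sum_(i < 3) F i = F t0 + F t1 + F t2.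
Proof.
rewrite !big_ord_recl big_ord0 addr0 !addrA.
by congr (_ + _ + _); congr F; apply: val_inj.
Qed.
Ltac split31 := let i := fresh "i" in let j := fresh "j" in intros i j;
  rewrite ?(ord1 j); case: (ord3 i) => [->|[->|->]].

Section CaseB.
Context {R : realType}.

Definition Fb (lam : R) (p : 'cV[R]_5 * 'M[R]_5) : 'cV[R]_3 :=
  \col_(i < 3) (lam^-1 * p.2 o0 (nth o0 [:: o1; o2; o3] i)).
Definition Gb (lam : R) (c : 'cV[R]_3) : 'cV[R]_5 * 'M[R]_5 :=
  (pt15 0 1, Bm 1 (lam * c t0 0) (lam * c t1 0) (lam * c t2 0)).

Lemma c2_cont (k l : 'I_5) : continuous (fun p : 'cV[R]_5 * 'M[R]_5 => p.2 k l).
Proof. move=> p; exact: (continuous_comp (@snd_cont _ _ _ p) (@coord_continuous R _ _ k l p.2)). Qed.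

Lemma Fb_polyk lam : polyk 1 (Fb lam).
Proof.
split.
  apply: mx_cont => i j; rewrite /Fb; under eq_fun do rewrite mxE.
  move=> p; apply: cvgM; [exact: cvg_cst | exact: c2_cont].
exists (fun _ q => Fb lam q), (fun _ _ => 0); split; last by move=> v; exists (Fb lam v).
move=> p q h; rewrite scaler0 addr0; apply/matrixP => i j; rewrite !mxE /=; ring.
Qed.

Lemma Bm_dec (w1 w2 w3 : R) :
  Bm 1 w1 w2 w3 = w1 *: Bm 1 1 0 0 + w2 *: Bm 1 0 1 0 + w3 *: Bm 1 0 0 1.
Proof.
apply/matrixP => i j; rewrite !mxE; move: i j; split5; cbn [nth nat_of_ord]; ring.
Qed.

Lemma mulc_cont {X : topologicalType} (k : R) (c : X -> R) :
  continuous c -> continuous (fun x => k * c x).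
Proof. by move=> Hc x; apply: cvgM; [exact: cvg_cst | exact: Hc]. Qed.

Lemma Gb_polyk lam : polyk 1 (Gb lam).
Proof.
split.
  rewrite /Gb; apply: (@pair_cont R _ 'cV[R]_5 'M[R]_5 (fun _ => pt15 0 1)); first exact: cst_continuous.
  under eq_fun do rewrite Bm_dec.
  by repeat apply: add_cont; apply: scal_cont; apply: mulc_cont; exact: coord_continuous.
exists (fun _ (v : 'cV[R]_3) => ((0 : 'cV[R]_5), Bm 1 (lam * v t0 0) (lam * v t1 0) (lam * v t2 0))), (fun _ _ => 0).
split; last by move=> v; exists ((0 : 'cV[R]_5), Bm 1 (lam * v t0 0) (lam * v t1 0) (lam * v t2 0)).
move=> c v h; rewrite scaler0 addr0 /Gb pairZ pairD scaler0 addr0; congr (_, _).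
apply/matrixP => i j; rewrite !mxE; move: i j; split5; cbn [nth nat_of_ord]; ring.
Qed.

Lemma caseB (x1 x5 : R) (p0 : 'cV[R]_5 * 'M[R]_5) :
  ASD_bundle p0 -> p0.1 = pt15 x1 x5 -> x5 = 1 -> p0.2 != 0 ->
  diffeomorphic (su2orbit p0) (@sphere R 3).
Proof.
move=> HA E1 e5 Hnz.
have N := norm_pt _ _ _ HA E1.
have x10 : x1 = 0.
  apply/eqP; rewrite -sqrf_eq0; apply/eqP; move: N; rewrite e5; lra.
have HA' : ASD_bundle (pt15 0 1, p0.2).
  by move: HA; rewrite -x10 -e5 -E1 -surjective_pairing.
have F := ASD_form _ _ (or_introl erefl) HA'.
set w1 := p0.2 o0 o1 in F; set w2 := p0.2 o0 o2 in F; set w3 := p0.2 o0 o3 in F.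
clearbody w1 w2 w3.
set lam2 := w1^+2 + w2^+2 + w3^+2.
have l2p : 0 < lam2.
  rewrite lt_def; apply/andP; split; last by rewrite /lam2; nra.
  apply/eqP => l0; move/eqP: Hnz; apply.
  have z1 : w1 = 0 by move: l0; rewrite /lam2; nra.
  have z2 : w2 = 0 by move: l0; rewrite /lam2; nra.
  have z3 : w3 = 0 by move: l0; rewrite /lam2; nra.
  rewrite F z1 z2 z3; apply/matrixP => i j; rewrite !mxE; move: i j; split5;
    cbn [nth nat_of_ord]; ring.
set lam := Num.sqrt lam2.
have lp : 0 < lam by rewrite sqrtr_gt0.
have ll : lam ^+ 2 = lam2 by rewrite sqr_sqrtr // ltW.
have ln : lam != 0 by rewrite gt_eqF.
have orb : forall a1 a2 b1 b2, act (su2mx a1 a2 b1 b2) p0 =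
    (pt15 0 1, Bm 1 (rot1 a1 a2 b1 b2 w1 w2 w3) (rot2 a1 a2 b1 b2 w1 w2 w3)
                    (rot3 a1 a2 b1 b2 w1 w2 w3)).
  move=> a1 a2 b1 b2; rewrite /act E1 F act_B1 act_pt x10 e5; congr (_, _).
  by apply/matrixP => i j; rewrite !mxE; move: i j; split51; cbn [nth nat_of_ord]; ring.
have Fb_orb : forall a1 a2 b1 b2, Fb lam (act (su2mx a1 a2 b1 b2) p0) =
    \col_(i < 3) (lam^-1 * nth 0 [:: rot1 a1 a2 b1 b2 w1 w2 w3; rot2 a1 a2 b1 b2 w1 w2 w3;
                                     rot3 a1 a2 b1 b2 w1 w2 w3] i).
  move=> a1 a2 b1 b2; rewrite orb; apply/matrixP; split31; rewrite !mxE;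
    cbn [nth nat_of_ord]; by [].
rewrite /diffeomorphic; exists (Fb lam), (Gb lam); split.
- move=> a [g [a1 [a2 [b1 [b2 [Hn ->]]]]] <-]; rewrite Fb_orb /sphere /= sum3 !mxE;
    cbn [nth nat_of_ord].
  transitivity ((rot1 a1 a2 b1 b2 w1 w2 w3 ^+ 2 + rot2 a1 a2 b1 b2 w1 w2 w3 ^+ 2 +
                 rot3 a1 a2 b1 b2 w1 w2 w3 ^+ 2) / lam ^+ 2); first by field.
  have -> : rot1 a1 a2 b1 b2 w1 w2 w3 ^+ 2 + rot2 a1 a2 b1 b2 w1 w2 w3 ^+ 2 +
            rot3 a1 a2 b1 b2 w1 w2 w3 ^+ 2 = (a1^+2 + a2^+2 + b1^+2 + b2^+2) ^+ 2 * lam2.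
    by rewrite /rot1 /rot2 /rot3 /lam2; ring.
  by rewrite Hn expr1n mul1r ll divff // gt_eqF.
- move=> b Hb; move: Hb; rewrite /sphere /= sum3 => Hb.
  have [a1 [a2 [b1 [b2 [Hn [r1 r2 r3]]]]]] := hit2 _ _ _ _ _ _ _ lp (esym ll) Hb.
  exists (su2mx a1 a2 b1 b2); first by exists a1, a2, b1, b2.
  by rewrite orb r1 r2 r3.
- move=> a [g [a1 [a2 [b1 [b2 [Hn ->]]]]] <-]; rewrite Fb_orb orb /Gb !mxE; cbn [nth nat_of_ord].
  by rewrite !(mulVKf ln).
- move=> b _; rewrite /Gb /Fb; apply/matrixP; split31; rewrite !mxE;
    cbn [nth nat_of_ord]; by rewrite mulKf.
- split; [exact: polyk_smooth_map (Fb_polyk lam) | exact: polyk_smooth_map (Gb_polyk lam)].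
Qed.
End CaseB.

Theorem lemma4p6 (R : realType) :
  (forall p : 'cV[R]_5 * 'M[R]_5, ASD_bundle p ->
     exists g, SU2 g /\ exists x1 x5 : R, 0 <= x1 /\ (act g p).1 = pt15 x1 x5) /\
  (forall (x1 x5 : R) (p0 : 'cV[R]_5 * 'M[R]_5),
     ASD_bundle p0 -> 0 <= x1 -> p0.1 = pt15 x1 x5 ->
     [/\ (x5 != 1 -> x5 != -1 -> diffeomorphic (su2orbit p0) (@sphere R 4)),
         (x5 = 1 -> p0.2 != 0 -> diffeomorphic (su2orbit p0) (@sphere R 3)) &
         ((x5 = 1 /\ p0.2 = 0) \/ x5 = -1 ->
            diffeomorphic (su2orbit p0) (@point_space R))]).
Proof.
split; first by move=> p _; exact: part1.
move=> x1 x5 p0 HA x1ge E1; split.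
- by move=> h1 h2; exact: (caseA _ _ _ HA x1ge E1 h1 h2).
- by move=> e5 hnz; exact: (caseB _ _ _ HA E1 e5 hnz).
- exact: (caseC _ _ _ HA E1).
Qed.
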